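(* For $\theta>0$ let $\Phi(1,\theta+1,\theta)=\sum_{n\ge0}\theta^n/(\theta+1)_n$ and let $\varphi_\theta$ be the probability on $D=\{1,2,\dots\}$ given by $$\varphi_\theta(d)=\frac{1}{\Phi(1,\theta+1,\theta)-1}\cdot\frac{\theta^d}{(\theta+1)_d}\qquad(d\in D).$$ Let $\tilde d_1,\tilde d_2,\dots$ be the coordinate maps on $D^\infty$, $\bar d^{(n)}=\frac1n\sum_{k=1}^n\tilde d_k$, let $\theta_0>0$, and let $$D_0=\Big\{(d_1,d_2,\dots)\in D^\infty:\exists n_0\text{ such that }\tfrac1n\textstyle\sum_{k=1}^n d_k>1\text{ for every }n\ge n_0\Big\}.$$ Then $\varphi_{\theta_0}^\infty(D_0)=1$, where $\varphi^\infty_{\theta_0}$ is the product measure. Moreover, for each point of $D_0$ and each $n\ge n_0$, the equation $$\Phi(1,\theta+1,\theta)=1+\frac{\theta}{\bar d^{(n)}}$$ has a unique solution $\theta>0$.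
   Context: $(a)_n$ denotes the rising factorial $a(a+1)\cdots(a+n-1)$, $(a)_0=1$. *)

(* Defs.v *)
From HB Require Import structures.
From mathcomp Require Import all_boot all_order all_algebra.
From mathcomp Require Import all_classical all_reals all_analysis.
Set Implicit Arguments. Unset Strict Implicit. Unset Printing Implicit Defensive.
Import Order.TTheory GRing.Theory Num.Theory.
Local Open Scope classical_set_scope.
Local Open Scope ring_scope.

Definition rising {R : numDomainType} (a : R) (n : nat) : R :=
  \prod_(i < n) (a + i%:R).

Definition Phi {R : realType} (t : R) : R :=
  \big[+%R/0]_(0 <= n <oo) (t ^+ n / rising (t + 1) n).

Definition D := {n : nat | (0 < n)%N}.
HB.instance Definition _ := Choice.on D.
HB.instance Definition _ := isPointed.Build D (exist _ 1%N isT).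

Definition varphi {R : realType} (t : R) (d : D) : R :=
  (Phi t - 1)^-1 * (t ^+ (val d) / rising (t + 1) (val d)).

(* D^oo : sequences x with x k = d_{k+1} *)
Definition cylinder (n : nat) (a : nat -> D) : set (nat -> D) :=
  [set x | forall i, (i < n)%N -> x i = a i].

Definition cylinders : set (set (nat -> D)) :=
  [set C | exists n a, C = cylinder n a].

Notation Dinf := (g_sigma_algebraType cylinders).

(* P is the product measure varphi^oo: it agrees with the product of the
   marginals on all cylinders (this determines P uniquely). *)
Definition is_product_measure {R : realType} (phi : D -> R)
    (P : {measure set Dinf -> \bar R}) : Prop :=
  forall n a, P (cylinder n a) = (\prod_(i < n) phi (a i))%:E.

Definition dbar {R : realType} (n : nat) (x : nat -> D) : R :=
  n%:R^-1 * \sum_(k < n) ((val (x k))%:R : R).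

Definition D0 {R : realType} : set (nat -> D) :=
  [set x | exists n0, forall n, (n0 <= n)%N -> 1 < dbar (R := R) n x].

(* Main.v *)
Require Import Defs.
From HB Require Import structures.
From mathcomp Require Import all_boot all_order all_algebra.
From mathcomp Require Import all_classical all_reals all_analysis.
From mathcomp Require Import lra ring zify.
Import Order.TTheory GRing.Theory Num.Theory.
Import numFieldNormedType.Exports.
Local Open Scope classical_set_scope.
Local Open Scope ring_scope.
Section Real.
Variable R : realType.
Implicit Types t s : R.

Definition u t (n : nat) : R := t ^+ n / rising (t + 1) n.

Lemma risingS t n : rising (t + 1) n.+1 = rising (t + 1) n * (t + 1 + n%:R).
Proof. by rewrite /rising big_ord_recr. Qed.

Lemma posn t (n : nat) : 0 <= t -> 0 < t + 1 + n%:R.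
Proof. move=> t0; have h : (0:R) <= n%:R by exact: ler0n.
lra. Qed.

Lemma rising_gt0 t n : 0 <= t -> 0 < rising (t + 1) n.
Proof.
move=> t0; rewrite /rising; apply: prodr_gt0 => i _.
by apply: posn.
Qed.

Lemma u0 t : u t 0 = 1.
Proof. by rewrite /u /rising big_ord0 expr0 divr1. Qed.

Lemma uS t n : 0 <= t -> u t n.+1 = u t n * (t / (t + 1 + n%:R)).
Proof.
move=> t0; rewrite /u risingS exprSr.
have h1 := rising_gt0 t n t0.
have h2 := posn t n t0.
field; apply/andP; split; exact: lt0r_neq0.
Qed.

Lemma u_ge0 t n : 0 <= t -> 0 <= u t n.
Proof.
move=> t0; rewrite /u divr_ge0 ?exprn_ge0 //; exact/ltW/rising_gt0.
Qed.

Lemma u_gt0 t n : 0 < t -> 0 < u t n.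
Proof.
move=> t0; rewrite /u divr_gt0 ?exprn_gt0 //; exact/rising_gt0/ltW.
Qed.

Lemma wsum t N : 0 <= t ->
  \sum_(i < N.+1) i%:R * u t i = t * (1 - u t N).
Proof.
move=> t0; elim: N => [|N IH].
  by rewrite big_ord_recr big_ord0 /= u0 mul0r add0r subrr mulr0.
rewrite big_ord_recr /= IH uS //.
have h2 := posn t N t0.
have h2' : t + 1 + N%:R != 0 by rewrite gt_eqF.
rewrite -natr1.
field; by [].
Qed.


Lemma PhiE t : Phi t = limn (series (u t) : nat -> R).
Proof. by rewrite /Phi seriesEnat. Qed.

Lemma series_le t N : 0 <= t -> series (u t) N.+1 <= 1 + t.
Proof.
move=> t0; rewrite seriesEord /= big_ord_recl u0 lerD2l.
apply: (@le_trans _ _ (\sum_(i < N.+1) i%:R * u t i)).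
  rewrite big_ord_recl /= mul0r add0r; apply: ler_sum => i _.
  rewrite /bump /= add1n ler_peMl ?u_ge0 //.
  by rewrite ler1n.
rewrite wsum // ler_piMr // lerBlDr lerDl u_ge0 //.
Qed.

Lemma series_nd t : 0 <= t -> nondecreasing_seq (series (u t)).
Proof.
move=> t0; apply/nondecreasing_seqP => n; rewrite seriesSr lerDl u_ge0 //.
Qed.

Lemma series_cvg t : 0 <= t -> cvgn (series (u t) : nat -> R).
Proof.
move=> t0; apply: nondecreasing_is_cvgn; first exact: series_nd.
exists (1 + t) => _ [[|n] _ <-]; last exact: series_le.
by rewrite seriesEord /= big_ord0; lra.
Qed.

Lemma Phi_ge t N : 0 <= t -> series (u t) N <= Phi t.
Proof.
by move=> t0; rewrite PhiE; apply: nondecreasing_cvgn_le; [exact: series_nd|exact: series_cvg].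
Qed.

Lemma series_cvgS t : 0 <= t -> (fun N => series (u t) N.+1) @ \oo --> Phi t.
Proof.
move=> t0; rewrite PhiE.
have /cvg_ex[l hl] := series_cvg t t0.
rewrite (cvg_lim _ hl) //.
have := hl; rewrite -cvg_shiftS; exact.
Qed.

Lemma u_cvg0 t : 0 <= t -> u t n @[n --> \oo] --> 0.
Proof. by move=> t0; apply: cvg_series_cvg_0; exact: series_cvg. Qed.


Lemma frac_le t s (c : R) : 0 <= t -> t <= s -> 0 < c -> t / (t + c) <= s / (s + c).
Proof.
move=> t0 ts c0; have h1 : 0 < t + c by lra.
have h2 : 0 < s + c by lra.
rewrite ler_pdivrMr // mulrAC ler_pdivlMr //; nra.
Qed.

Lemma frac_lt t s (c : R) : 0 <= t -> t < s -> 0 < c -> t / (t + c) < s / (s + c).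
Proof.
move=> t0 ts c0; have h1 : 0 < t + c by lra.
have h2 : 0 < s + c by lra.
rewrite ltr_pdivrMr // mulrAC ltr_pdivlMr //; nra.
Qed.

Lemma ratio_le t s k d : 0 <= t -> t <= s ->
  u s k * u t (k + d) <= u t k * u s (k + d).
Proof.
move=> t0 ts; have s0 : 0 <= s by lra.
elim: d => [|d IH]; first by rewrite addn0 mulrC.
rewrite addnS (uS t) // (uS s) // (mulrA (u s k)) (mulrA (u t k)).
have c0 : 0 < 1 + (k + d)%:R :> R.
  have h : (0:R) <= (k+d)%:R by exact: ler0n.
  lra.
apply: ler_pM => //.
- by rewrite mulr_ge0 // u_ge0.
- by rewrite divr_ge0 //; have := posn t (k + d) t0; lra.
- by rewrite -!addrA; apply: frac_le.
Qed.

Lemma ratio_strict t s : 0 < t -> t < s -> u s 1 * u t 2 < u t 1 * u s 2.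
Proof.
move=> t0 ts; have s0 : 0 < s by lra.
rewrite (uS t 1) ?(uS s 1); try lra.
rewrite mulrCA ltr_pM2l ?u_gt0 // ltr_pM2l ?u_gt0 //.
by rewrite -!addrA; apply: frac_lt => //; lra.
Qed.


Lemma dsum (a b : nat -> R) N :
  (forall k n, (k <= n)%N -> b k * a n <= a k * b n) ->
  (a 0%N * b 1%N - b 0%N * a 1%N) / 2 <=
  (\sum_(i < N.+2) a i) * (\sum_(i < N.+2) i.+1%:R * b i) -
  (\sum_(i < N.+2) b i) * (\sum_(i < N.+2) i.+1%:R * a i).
Proof.
move=> hab.
set X := (X in _ <= X).
have eX : X = \sum_(k < N.+2) \sum_(n < N.+2) (a k * b n - b k * a n) * n.+1%:R.
  rewrite /X !mulr_suml -sumrB; apply: eq_bigr => k _.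
  rewrite !mulr_sumr -sumrB; apply: eq_bigr => n _; ring.
have eY : \sum_(k < N.+2) \sum_(n < N.+2) (a k * b n - b k * a n) * k.+1%:R = - X.
  rewrite eX exchange_big /= -sumrN; apply: eq_bigr => n _.
  rewrite -sumrN; apply: eq_bigr => k _; ring.
have e2 : 2 * X = \sum_(k < N.+2) \sum_(n < N.+2)
     (a k * b n - b k * a n) * (n.+1%:R - k.+1%:R).
  have -> : 2 * X = X - (- X) by ring.
  rewrite -eY {1}eX -sumrB; apply: eq_bigr => k _; rewrite -sumrB.
  by apply: eq_bigr => n _; ring.
have W0 : forall k n : nat, 0 <= (a k * b n - b k * a n) * (n.+1%:R - k.+1%:R).
  move=> k n; case: (leqP k n) => hkn.
    apply: mulr_ge0; first by rewrite subr_ge0 hab.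
    by rewrite subr_ge0 ler_nat ltnS.
  apply: mulr_le0.
    rewrite subr_le0; have := hab _ _ (ltnW hkn); lra.
  by rewrite subr_le0 ler_nat ltnS ltnW.
have : (a 0%N * b 1%N - b 0%N * a 1%N) <= 2 * X.
  rewrite e2 big_ord_recl /=.
  apply: (@le_trans _ _ (\sum_(n < N.+2) (a 0%N * b n - b 0%N * a n) * (n.+1%:R - 1%:R))).
    rewrite big_ord_recl big_ord_recl /=.
    have h1 : 0 <= \sum_(i < N) (a 0%N * b (bump 0 (bump 0 i)) - b 0%N * a (bump 0 (bump 0 i))) *
         ((bump 0 (bump 0 i)).+1%:R - 1%:R) by apply: sumr_ge0 => i _; exact: W0.
    have h0 := W0 0%N 0%N.
    rewrite /bump /= in h1 *.
    have -> : (2%:R - 1%:R : R) = 1 by rewrite -natrB.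
    lra.
  rewrite lerDl; apply: sumr_ge0 => i _; apply: sumr_ge0 => j _; exact: W0.
lra.
Qed.


Lemma key t s : 0 < t -> t < s -> (Phi s - 1) * t < (Phi t - 1) * s.
Proof.
move=> t0 ts; have s0 : 0 < s by lra.
have t0' : 0 <= t by lra.
have s0' : 0 <= s by lra.
pose a i := u t i.+1; pose b i := u s i.+1.
have hab : forall k n, (k <= n)%N -> b k * a n <= a k * b n.
  move=> k n kn; rewrite /a /b.
  have := @ratio_le t s k.+1 (n - k) t0' (ltW ts).
  by rewrite addSn subnKC.
pose c := (a 0%N * b 1%N - b 0%N * a 1%N) / 2.
have c0 : 0 < c by rewrite /c /a /b; have := ratio_strict t s t0 ts; lra.
pose X N := (series (u t) N.+1 - 1) * (s * (1 - u s N)) -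
            (series (u s) N.+1 - 1) * (t * (1 - u t N)).
have hX : forall M, c <= X M.+2.
  move=> M; have := dsum a b M hab; rewrite /X -/c.
  have ser : forall r, series (u r) M.+3 - 1 = \sum_(i < M.+2) u r i.+1.
    by move=> r; rewrite seriesEord /= big_ord_recl u0 addrAC subrr add0r.
  have ws : forall r, 0 <= r -> \sum_(i < M.+2) i.+1%:R * u r i.+1 = r * (1 - u r M.+2).
    move=> r r0; rewrite -wsum // [RHS]big_ord_recl /= mul0r add0r.
    by apply: eq_bigr => i _.
  by rewrite !ser -(ws s) // -(ws t).
have cX : X N @[N --> \oo] --> (Phi t - 1) * (s * (1 - 0)) - (Phi s - 1) * (t * (1 - 0)).
  apply: cvgB; apply: cvgM.
  - by apply: cvgB; [exact: series_cvgS|exact: cvg_cst].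
  - apply: cvgM; first exact: cvg_cst.
    by apply: cvgB; [exact: cvg_cst|exact: u_cvg0].
  - by apply: cvgB; [exact: series_cvgS|exact: cvg_cst].
  - apply: cvgM; first exact: cvg_cst.
    by apply: cvgB; [exact: cvg_cst|exact: u_cvg0].
have : c <= lim (X N @[N --> \oo]).
  apply: limr_ge; first by apply/cvg_ex; eexists; exact: cX.
  exists 2%N => // N /= hN.
  by have := hX (N - 2)%N; rewrite -addn2 subnK.
rewrite (cvg_lim _ cX) // !subr0 !mulr1; lra.
Qed.


Lemma u_mono t s n : 0 <= t -> t <= s -> u t n <= u s n.
Proof.
move=> t0 ts; elim: n => [|n IH]; first by rewrite !u0.
rewrite (uS t) // (uS s) ?(le_trans t0 ts) //.
apply: ler_pM => //; first exact: u_ge0.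
  by rewrite divr_ge0 //; have := posn t n t0; lra.
rewrite -!addrA; apply: frac_le => //.
Qed.

Lemma Phi_mono t s : 0 <= t -> t <= s -> Phi t <= Phi s.
Proof.
move=> t0 ts; have s0 : 0 <= s by lra.
rewrite !PhiE; apply: ler_lim; [exact: series_cvg|exact: series_cvg|].
near=> n; rewrite !seriesEord /=; apply: ler_sum => i _; exact: u_mono.
Unshelve. all: by end_near.
Qed.

Lemma Phi_ge1 t : 0 <= t -> 1 <= Phi t.
Proof.
move=> t0; have := Phi_ge t 1 t0; rewrite seriesEord /= big_ord_recl big_ord0 u0 addr0.
exact.
Qed.

Lemma Phi_lip (x y : R) : 0 < x -> 0 < y ->
  `|Phi y - Phi x| <= (Phi x - 1) / x * `|y - x|.
Proof.
move=> x0 y0; rewrite mulrAC ler_pdivlMr //.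
case: (ltgtP y x) => hyx.
- have k := key y x y0 hyx; have m := Phi_mono y x (ltW y0) (ltW hyx).
  rewrite (ler0_norm (x:=y - x)) ?(ler0_norm (x:=Phi y - Phi x)); nra.
- have k := key x y x0 hyx; have m := Phi_mono x y (ltW x0) (ltW hyx).
  rewrite (ger0_norm (x:=y - x)) ?(ger0_norm (x:=Phi y - Phi x)); nra.
- by rewrite hyx !subrr normr0 mul0r mulr0.
Qed.

Lemma Phi_cont (x : R) : 0 < x -> {for x, continuous Phi}.
Proof.
move=> x0; apply/cvgrPdist_lt => e e0.
have g1 := Phi_ge1 x (ltW x0).
set K := (Phi x - 1) / x + 1.
have K0 : 0 < K.
  rewrite /K; have h : 0 <= (Phi x - 1) / x by rewrite divr_ge0 //; lra.
  lra.
have m0 : 0 < Num.min x (e / K) by rewrite lt_min x0 divr_gt0.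
near=> y.
have /andP[hx he] : (`|x - y| < x) && (`|x - y| < e / K).
  rewrite -lt_min; near: y.
  exact: (@cvgr_dist_lt _ _ _ (nbhs x) _ id x (@cvg_id _ (nbhs x)) _ m0).
have y0 : 0 < y by move: hx; rewrite ltr_norml; lra.
have := Phi_lip x y x0 y0.
rewrite distrC -normrN opprB; move=> hl.
rewrite ltr_pdivlMr // in he.
have : (Phi x - 1) / x * `|x - y| <= K * `|x - y|.
  by apply: ler_wpM2r; [exact: normr_ge0|rewrite /K lerDl].
rewrite -[`|y - x|]normrN opprB in hl.
nra.
Unshelve. all: by end_near.
Qed.


Lemma u_le1 t n : 0 <= t -> u t n <= 1.
Proof.
move=> t0; elim: n => [|n IH]; first by rewrite u0.
rewrite uS //; rewrite -[1]mulr1; apply: ler_pM => //; first exact: u_ge0.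
  by rewrite divr_ge0 //; have := posn t n t0; lra.
have := posn t n t0; move=> h; rewrite ler_pdivrMr // mul1r.
have h' : (0:R) <= n%:R by exact: ler0n.
lra.
by [].
Qed.

Lemma ind_sum n K : (\sum_(i < n) ((i < K)%N : nat) = minn n K)%N.
Proof.
elim: n => [|n IH]; first by rewrite big_ord0 min0n.
rewrite big_ord_recr /= IH; case: ltnP => h /=.
  by rewrite !minnE; apply/eqP; rewrite eqn_leq; apply/andP; split; lia.
by rewrite !minnE; apply/eqP; rewrite eqn_leq; apply/andP; split; lia.
Qed.

Lemma Phi_upper (b : R) (K : nat) : 0 <= b -> (0 < K)%N -> Phi b <= K%:R + b / K%:R.
Proof.
move=> b0 K0; have K0' : (0:R) < K%:R by rewrite ltr0n.
rewrite PhiE; apply: limr_le; first exact: series_cvg.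
near=> N.
have [M ->] : exists M, N = M.+1.
  exists N.-1; rewrite prednK //; near: N; exists 1%N => //.
rewrite seriesEord /=.
apply: (@le_trans _ _ (\sum_(i < M.+1) (((i < K)%N : nat)%:R + i%:R * u b i / K%:R))).
  apply: ler_sum => i _; case: (ltnP i K) => h /=.
    apply: (@le_trans _ _ 1); first exact: (u_le1 b i b0).
    rewrite lerDl; apply: divr_ge0; [apply: mulr_ge0; [exact: ler0n|exact: u_ge0]|exact: ler0n].
  rewrite add0r ler_pdivlMr // [_ * u b i]mulrC.
  by apply: ler_wpM2l; [exact: u_ge0|rewrite ler_nat].
rewrite big_split /= -mulr_suml wsum // -natr_sum ind_sum.
apply: lerD; first by rewrite ler_nat geq_minr.
rewrite ler_pM2r ?invr_gt0 // ler_piMr //; last by rewrite lerBlDr lerDl u_ge0.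
Unshelve. all: by end_near.
Qed.


Lemma u1 t : 0 <= t -> u t 1 = t / (t + 1).
Proof. by move=> t0; rewrite (uS t 0) // u0 mul1r addr0. Qed.

Lemma exists_sol (m : R) : 1 < m -> exists2 th, 0 < th & Phi th = 1 + th / m.
Proof.
move=> m1; have m0 : 0 < m by lra.
pose f th := Phi th - 1 - th / m.
pose a := (m - 1) / 2.
have a0 : 0 < a by rewrite /a; lra.
pose K := (Num.truncn (2 * m)).+1.
have hK : 2 * m < K%:R by exact: truncnS_gt.
pose b := 2 * m * K%:R.
have ab : a <= b.
  rewrite /a /b; have : 1 <= K%:R :> R by rewrite ler1n.
  nra.
have fa : 0 < f a.
  have h := Phi_ge a 2 (ltW a0).
  rewrite seriesEord /= big_ord_recr /= big_ord_recr /= big_ord0 add0r u0 u1 in h; last exact: ltW.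
  rewrite /f; suff : a / m < a / (a + 1) by lra.
  rewrite ltr_pM2l // ltf_pV2 //; rewrite ?posrE /a; lra.
have fb : f b < 0.
  have b0 : 0 <= b by lra.
  have h := Phi_upper b K b0 (isT : (0 < K)%N).
  have K0 : K%:R != 0 :> R by rewrite pnatr_eq0.
  have e1 : b / K%:R = 2 * m by rewrite /b mulfK.
  have e2 : b / m = 2 * K%:R by rewrite /b mulrAC mulfK // gt_eqF.
  rewrite /f e2; rewrite e1 in h; lra.
have cf : {within `[a, b], continuous f}.
  apply: continuous_subspace_itv => x; rewrite in_itv /= => /andP[xa xb].
  have x0 : 0 < x by lra.
  apply: cvgB; first by apply: cvgB; [exact: Phi_cont|exact: cvg_cst].
  by apply: cvgMl; exact: cvg_id.
have mm : Num.min (f a) (f b) <= 0 <= Num.max (f a) (f b).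
  apply/andP; split; [rewrite ge_min; apply/orP; right | rewrite le_max; apply/orP; left]; lra.
have [c cab fc] := IVT ab cf mm.
move: cab; rewrite in_itv /= => /andP[ca cb].
exists c; first lra.
move: fc; rewrite /f; lra.
Qed.

Lemma uniq_sol (m : R) : 1 < m -> exists! th, 0 < th /\ Phi th = 1 + th / m.
Proof.
move=> m1; have [th th0 hth] := exists_sol m m1.
exists th; split => // th' [th0' hth'].
have e : (Phi th' - 1) * th = (Phi th - 1) * th' by rewrite hth hth'; ring.
case: (ltgtP th th') => // h.
- by have := key th th' th0 h; lra.
- by have := key th' th th0' h; lra.
Qed.

End Real.
Arguments u {R}.

Lemma sum_ge (x : nat -> D) n : (n <= \sum_(k < n) val (x k))%N.
Proof.
elim: n => [|n IH]; first by rewrite big_ord0.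
rewrite big_ord_recr /=; have := valP (x n); rewrite /= in IH * => h.
by rewrite -addn1; apply: leq_add.
Qed.

Lemma sum_gt (x : nat -> D) n i : (i < n)%N -> (2 <= val (x i))%N ->
  (n < \sum_(k < n) val (x k))%N.
Proof.
elim: n => [|n IH] // hi hx; rewrite big_ord_recr /=.
case: (ltnP i n) => h.
  have := IH h hx; have := valP (x n); rewrite /= => h1 h2.
  by rewrite -[n.+2]addn1; apply: leq_add.
have e : i = n by apply/eqP; rewrite eqn_leq h andbT -ltnS.
subst i; have := sum_ge x n; rewrite /= => h1.
by rewrite -[n.+2]addn2; apply: leq_add.
Qed.

Definition one : D := exist _ 1%N isT.

Lemma sum_ones (x : nat -> D) n : (forall i, x i = one) ->
  (\sum_(k < n) val (x k))%N = n.
Proof.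
move=> hx; elim: n => [|n IH]; first by rewrite big_ord0.
by rewrite big_ord_recr /= IH hx /= addn1.
Qed.

Definition Aones : set (nat -> D) := \bigcap_n cylinder n (fun _ => one).

Lemma D0E (R : realType) : D0 (R := R) = ~` Aones.
Proof.
apply/seteqP; split => x /=.
- move=> [n0 hn] hA.
  have hx : forall i, x i = one by move=> i; exact: (hA i.+1 I i).
  have := hn n0.+1 (leqnSn n0).
  rewrite /dbar -natr_sum sum_ones // mulVf ?ltxx //.
- move=> hA.
  case: (pselect (exists i, x i != one)) => [[i hi]|hne]; last first.
    exfalso; apply: hA => n _ /= k _.
    by apply/eqP/negPn/negP => h; apply: hne; exists k.
  have hv : (2 <= val (x i))%N.
    have h1 := valP (x i).
    have : val (x i) != 1%N.
      by apply: contra hi => /eqP h; apply/eqP/val_inj.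
    rewrite /= in h1 *; lia.
  exists i.+1 => n hn.
  have := sum_gt x n i hn hv.
  rewrite /dbar -natr_sum mulrC ltr_pdivlMr ?ltr0n ?mul1r ?ltr_nat //.
  by apply: leq_trans hn.
Qed.

Theorem mainTheorem7 (R : realType) (theta0 : R) (Htheta0 : 0 < theta0)
    (P : probability Dinf R) :
  is_product_measure (varphi theta0) P ->
  P (D0 (R := R)) = 1%E /\
  (forall (x : nat -> D) (n0 : nat),
     (forall n, (n0 <= n)%N -> 1 < dbar (R := R) n x) ->
     forall n, (n0 <= n)%N ->
       exists! theta : R, 0 < theta /\ Phi theta = 1 + theta / dbar n x).
Proof.
move=> hP; split; last first.
  by move=> x n0 hx n hn; exact: uniq_sol (hx n hn).
have mcyl : forall n, measurable (cylinder n (fun _ => one) : set Dinf).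
  by move=> n; apply: sub_gen_smallest; exists n, (fun _ => one).
have mA : measurable (Aones : set Dinf) by apply: bigcapT_measurable.
pose p := varphi theta0 one.
have t0 : 0 <= theta0 by exact: ltW.
have g : u theta0 1 < Phi theta0 - 1.
  have := Phi_ge R theta0 3 t0.
  rewrite seriesEord /= !big_ord_recr /= big_ord0 add0r u0.
  have := u_gt0 R theta0 2 Htheta0; lra.
have u10 : 0 < u theta0 1 by exact: u_gt0.
have hp : p = u theta0 1 / (Phi theta0 - 1) by rewrite /p /varphi mulrC.
have p0 : 0 <= p by rewrite hp divr_ge0 //; lra.
have p1 : p < 1 by rewrite hp ltr_pdivrMr ?mul1r //; lra.
have hcyl : forall n, P (cylinder n (fun _ => one)) = (p ^+ n)%:E.
  by move=> n; rewrite hP prodr_const card_ord.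
have PA : forall n, (P Aones <= (p ^+ n)%:E)%E.
  move=> n; rewrite -hcyl; apply: le_measure; rewrite ?inE //.
  by move=> y /(_ n I).
have PA0 : P Aones = 0%E.
  have h0 := measure_ge0 P Aones.
  have fin : P Aones \is a fin_num.
    by rewrite ge0_fin_numE // (le_lt_trans (PA 0%N)) // ltry.
  rewrite -(fineK fin); congr (_%:E); apply/eqP; rewrite eq_le; apply/andP; split; last first.
    by rewrite -lee_fin fineK.
  have c : (p ^+ n) @[n --> \oo] --> 0 by apply: cvg_expr; rewrite ger0_norm.
  rewrite -(cvg_lim _ c) //; apply: limr_ge; first by apply/cvg_ex; eexists; exact: c.
  by near=> n; rewrite -lee_fin fineK //; exact: PA.
rewrite D0E -(measureU0 (measurableC mA) mA PA0) setvU.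
exact: probability_setT.
Unshelve. all: by end_near.
Qed.
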